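(* Consider the graphs $K^{h}_{n}$ ($3\le h\le n-1$), $K^{s+t}_{n}$ ($s,t\ge 2$, $n=s+t$) and $K^{s,t}_{n}$ ($s,t\ge2$, $n=s+t-1$). No two non-isomorphic graphs among all graphs of these three types are $D$-cospectral.
   Context: For a connected graph $G$, the distance matrix $D(G)$ has as $(i,j)$-entry the distance between the $i$-th and $j$-th vertices; two graphs are $D$-cospectral if their distance matrices have the same spectrum. $K^{h}_{n}$: the graph on $n$ vertices obtained from $K_h$ by attaching $n-h$ pendant edges to one vertex of $K_h$. $K^{s+t}_{n}$: the graph obtained from disjoint $K_s$ and $K_t$ by adding one edge joining a vertex of $K_s$ to a vertex of $K_t$. $K^{s,t}_{n}$: the graph obtained from disjoint $K_s$ and $K_t$ by identifying a vertex of $K_s$ with a vertex of $K_t$. *)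

(* Defs.v *)
From HB Require Import structures.
From mathcomp Require Import all_boot all_order all_algebra.
Unset Printing Implicit Defensive.
Import GRing.Theory.

Record sgraph := SGraph { nv : nat; adj : rel 'I_nv }.

Definition reach (G : sgraph) (k : nat) (x : 'I_(nv G)) : {set 'I_(nv G)} :=
  iter k (fun B : {set 'I_(nv G)} =>
            B :|: [set z | [exists y in B, adj G y z]]) [set x].

(* graph distance: least k with y within k steps of x (for connected graphs
   this is < nv G, so searching k in [0, nv G) suffices) *)
Definition dist (G : sgraph) (x y : 'I_(nv G)) : nat :=
  find (fun k => y \in reach G k x) (iota 0 (nv G)).

Definition distmx (G : sgraph) : 'M[rat]_(nv G) :=
  \matrix_(i, j) ((dist G i j)%:R)%R.

Definition D_cospectral (G1 G2 : sgraph) : Prop :=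
  char_poly (distmx G1) = char_poly (distmx G2).

Definition isomorphic (G1 G2 : sgraph) : Prop :=
  exists f : 'I_(nv G1) -> 'I_(nv G2),
    bijective f /\ forall x y, adj G2 (f x) (f y) = adj G1 x y.

(* K^h_n : K_h on {0..h-1}, with pendant vertices h..n-1 attached to 0 *)
Definition Kh (h n : nat) : sgraph :=
  @SGraph n (fun x y : 'I_n => (x != y) &&
    [|| (x < h) && (y < h), (x == 0 :> nat) && (h <= y) | (y == 0 :> nat) && (h <= x)]).

(* K^{s+t}_n (n = s+t): K_s on {0..s-1}, K_t on {s..s+t-1}, plus edge 0-s *)
Definition Ksplus (s t : nat) : sgraph :=
  @SGraph (s + t) (fun x y : 'I_(s + t) => (x != y) &&
    [|| (x < s) && (y < s), (s <= x) && (s <= y),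
        (x == 0 :> nat) && (y == s :> nat) | (x == s :> nat) && (y == 0 :> nat)]).

(* K^{s,t}_n (n = s+t-1): K_s on {0..s-1}, K_t on {0} u {s..s+t-2}; vertex 0 shared *)
Definition Kscomma (s t : nat) : sgraph :=
  @SGraph (s + t - 1) (fun x y : 'I_(s + t - 1) => (x != y) &&
    (((x < s) && (y < s)) ||
     (((x == 0 :> nat) || (s <= x)) && ((y == 0 :> nat) || (s <= y))))).

Definition in_families (G : sgraph) : Prop :=
  (exists h n, 3 <= h /\ h <= n - 1 /\ G = Kh h n) \/
  (exists s t, 2 <= s /\ 2 <= t /\ G = Ksplus s t) \/
  (exists s t, 2 <= s /\ 2 <= t /\ G = Kscomma s t).

(* Main.v *)
Require Import Defs.
From mathcomp Require Import all_boot all_order all_algebra.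
From mathcomp Require Import zify ring lra.
Import GRing.Theory Num.Theory.

Lemma reachS G k x : reach G k.+1 x =
  reach G k x :|: [set z | [exists y in reach G k x, adj G y z]].
Proof. by rewrite /reach iterS. Qed.

Lemma find_leq_iota m s n : s <= m < s + n ->
  find (fun k => m <= k) (iota s n) = m - s.
Proof.
elim: n s => [|n IH] s /=; first lia.
move=> H; case: ifP => Hm; first lia.
rewrite IH; lia.
Qed.

Lemma dist_char (G : sgraph) (f : 'I_(nv G) -> 'I_(nv G) -> nat) :
  (forall x y, (f x y == 0) = (x == y)) ->
  (forall x z y, adj G z y -> f x y <= (f x z).+1) ->
  (forall x y, 0 < f x y -> exists z, adj G z y /\ (f x z).+1 = f x y) ->
  (forall x y, f x y < nv G) ->
  forall x y, dist G x y = f x y.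
Proof.
move=> H0 Hlip Hpath Hlt x y.
have Hr : forall k, reach G k x = [set z | f x z <= k].
  elim=> [|k IH].
    by apply/setP=> z; rewrite /reach /= !inE leqn0 H0 eq_sym.
  rewrite reachS IH; apply/setP=> z; rewrite !inE.
  apply/idP/idP.
    case/orP=> [Hz|/existsP[w /andP[]]]; first lia.
    rewrite inE => Hw Hadj; have := Hlip x w z Hadj; lia.
  move=> Hz; case: (ltnP (f x z) k.+1) => Hk.
    by apply/orP; left; lia.
  have Hz1 : f x z = k.+1 by lia.
  have [w [Hadj Hw]] := Hpath x z (ltac:(lia)).
  apply/orP; right; apply/existsP; exists w; rewrite inE Hadj andbT; lia.
rewrite /dist.
rewrite (@eq_find _ _ (fun k => f x y <= k)); last by move=> k; rewrite Hr inE.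
rewrite find_leq_iota ?subn0 //; have := Hlt x y; lia.
Qed.

Lemma dist_nat (G : sgraph) (R : nat -> nat -> bool) (f w : nat -> nat -> nat) :
 (forall x y : 'I_(nv G), adj G x y = R x y) ->
 (forall x y, x < nv G -> y < nv G -> (f x y == 0) = (x == y)) ->
 (forall x z y, x < nv G -> z < nv G -> y < nv G -> R z y -> f x y <= (f x z).+1) ->
 (forall x y, x < nv G -> y < nv G -> 0 < f x y ->
    [&& w x y < nv G, R (w x y) y & (f x (w x y)).+1 == f x y]) ->
 (forall x y, x < nv G -> y < nv G -> f x y < nv G) ->
 forall x y : 'I_(nv G), dist G x y = f x y.
Proof.
move=> HR H0 Hl Hw Hn x y.
apply: (@dist_char G (fun x y : 'I_(nv G) => f x y)) => //.
- by move=> a b; rewrite H0.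
- by move=> a b c; rewrite HR; apply: Hl.
- move=> a b Hp; have /and3P[W1 W2 /eqP W3] := Hw a b (ltn_ord _) (ltn_ord _) Hp.
  by exists (Ordinal W1); rewrite HR.
- by move=> a b; apply: Hn.
Qed.

Definition adjK (h x y : nat) : bool := (x != y) &&
    [|| (x < h) && (y < h), (x == 0) && (h <= y) | (y == 0) && (h <= x)].
Definition fK (h x y : nat) : nat := if x == y then 0 else if (x == 0) || (y == 0) then 1
  else if (x < h) && (y < h) then 1 else 2.
Definition wK (f : nat -> nat -> nat) (x y : nat) : nat := if f x y == 1 then x else 0.

Lemma distK h n : 3 <= h -> h <= n - 1 ->
  forall x y : 'I_(nv (Kh h n)), dist (Kh h n) x y = fK h x y.
Proof.
move=> H1 H2; apply: (@dist_nat (Kh h n) (adjK h) (fK h) (wK (fK h))) => //=;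
  rewrite /adjK /fK /wK => x y; try move=> z; repeat (case: ifP => /=); lia.
Qed.

Definition adjC (s x y : nat) : bool := (x != y) &&
    (((x < s) && (y < s)) || (((x == 0) || (s <= x)) && ((y == 0) || (s <= y)))).
Definition fC (s x y : nat) : nat := if x == y then 0 else if (x == 0) || (y == 0) then 1
  else if (x < s) == (y < s) then 1 else 2.

Lemma distC s t : 2 <= s -> 2 <= t ->
  forall x y : 'I_(nv (Kscomma s t)), dist (Kscomma s t) x y = fC s x y.
Proof.
move=> H1 H2; apply: (@dist_nat (Kscomma s t) (adjC s) (fC s) (wK (fC s))) => //=;
  rewrite /adjC /fC /wK => x y; try move=> z; repeat (case: ifP => /=); lia.
Qed.

Definition adjP (s x y : nat) : bool := (x != y) &&
    [|| (x < s) && (y < s), (s <= x) && (s <= y),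
        (x == 0) && (y == s) | (x == s) && (y == 0)].
Definition gP (s x y : nat) : nat := (if x == 0 then 0 else 1) + (if y == s then 0 else 1) + 1.
Definition fP (s x y : nat) : nat := if x == y then 0 else if (x < s) == (y < s) then 1
  else if x < s then gP s x y else gP s y x.
Definition wP (s x y : nat) : nat := if fP s x y == 1 then x else
  if x < s then (if y == s then 0 else s) else (if y == 0 then s else 0).

Lemma distP s t : 2 <= s -> 2 <= t ->
  forall x y : 'I_(nv (Ksplus s t)), dist (Ksplus s t) x y = fP s x y.
Proof.
move=> H1 H2; apply: (@dist_nat (Ksplus s t) (adjP s) (fP s) (wP s)) => //=;
  rewrite /wP /adjP /fP /gP => x y; try move=> z; repeat (case: ifP => /=); lia.
Qed.

Lemma iso_nat (G1 G2 : sgraph) (R1 R2 : nat -> nat -> bool) (g g' : nat -> nat) :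
 (forall x y : 'I_(nv G1), adj G1 x y = R1 x y) ->
 (forall x y : 'I_(nv G2), adj G2 x y = R2 x y) ->
 (forall x, x < nv G1 -> g x < nv G2) -> (forall y, y < nv G2 -> g' y < nv G1) ->
 (forall x, x < nv G1 -> g' (g x) = x) -> (forall y, y < nv G2 -> g (g' y) = y) ->
 (forall x y, x < nv G1 -> y < nv G1 -> R2 (g x) (g y) = R1 x y) -> isomorphic G1 G2.
Proof.
move=> H1 H2 Hg Hg' Hgg Hg'g HR.
exists (fun x : 'I_(nv G1) => Ordinal (Hg x (ltn_ord x))); split.
  exists (fun y : 'I_(nv G2) => Ordinal (Hg' y (ltn_ord y))).
    by move=> x; apply: val_inj => /=; rewrite Hgg.
  by move=> y; apply: val_inj => /=; rewrite Hg'g.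
by move=> x y; rewrite H1 H2 /= HR.
Qed.

Lemma iso_refl G : isomorphic G G.
Proof. by exists id; split => //; exists id. Qed.

Lemma iso_sym G1 G2 : isomorphic G1 G2 -> isomorphic G2 G1.
Proof.
case=> f [[g fg gf] Hadj]; exists g; split; first by exists f.
by move=> x y; rewrite -Hadj !gf.
Qed.

Lemma iso_trans G1 G2 G3 : isomorphic G1 G2 -> isomorphic G2 G3 -> isomorphic G1 G3.
Proof.
case=> f [[f' ff' f'f] Hf]; case=> g [[g' gg' g'g] Hg].
exists (g \o f); split; last by move=> x y /=; rewrite Hg Hf.
by exists (f' \o g') => x /=; rewrite ?gg' ?ff' ?g'g ?f'f.
Qed.

Lemma iso_comma_swap s t : (2 <= s) -> (2 <= t) -> isomorphic (Kscomma s t) (Kscomma t s).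
Proof.
move=> Hs Ht.
apply: (@iso_nat _ _ (adjC s) (adjC t)
  (fun x => if x == 0 then 0 else if x < s then x + t - 1 else x - s + 1)
  (fun y => if y == 0 then 0 else if y < t then y + s - 1 else y - t + 1)) => //=;
  rewrite /adjC => x; try move=> y; repeat (case: ifP => /=); lia.
Qed.

Lemma iso_plus_swap s t : (2 <= s) -> (2 <= t) -> isomorphic (Ksplus s t) (Ksplus t s).
Proof.
move=> Hs Ht.
apply: (@iso_nat _ _ (adjP s) (adjP t)
  (fun x => if x < s then x + t else x - s)
  (fun y => if y < t then y + s else y - t)) => //=;
  rewrite /adjP => x; try move=> y; repeat (case: ifP => /=); lia.
Qed.

Lemma iso_K_comma n : (4 <= n) -> isomorphic (Kh (n - 1) n) (Kscomma (n - 1) 2).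
Proof.
move=> Hn.
apply: (@iso_nat _ _ (adjK (n - 1)) (adjC (n - 1)) id id) => //=;
  rewrite /adjK /adjC => x; try move=> y; repeat (case: ifP => /=); lia.
Qed.

Local Open Scope ring_scope.

Lemma sylvester (R : comRingType) n k (X : 'M[R]_(n, k)) (Y : 'M[R]_(k, n)) :
  \det (1%:M + X *m Y) = \det (1%:M + Y *m X).
Proof.
have E1 : block_mx 1%:M X (- Y) 1%:M =
          block_mx 1%:M 0 (- Y) 1%:M *m block_mx 1%:M X 0 (1%:M + Y *m X).
  rewrite mulmx_block ?mulmx0 ?mul0mx ?mul1mx ?mulmx1 ?addr0 ?add0r ?mulNmx.
  by rewrite addrC addrK.
have E2 : block_mx 1%:M X (- Y) 1%:M =
          block_mx (1%:M + X *m Y) X 0 1%:M *m block_mx 1%:M 0 (- Y) 1%:M.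
  rewrite mulmx_block ?mulmx0 ?mul0mx ?mul1mx ?mulmx1 ?addr0 ?add0r ?mulmxN.
  by rewrite addrK.
have := congr1 determinant E1; rewrite E2 !det_mulmx det_lblock det_ublock.
by rewrite !det_ublock !det1 !mul1r !mulr1 => ->.
Qed.


Lemma mul_ind_l (F : fieldType) n k p (cl : 'I_n -> 'I_k) (A : 'M[F]_(k, p)) i m :
  ((\matrix_(i0, l) ((cl i0 == l)%:R : F)) *m A) i m = A (cl i) m.
Proof.
rewrite mxE (bigD1 (cl i)) //= mxE eqxx mul1r big1 ?addr0 // => l Hl.
by rewrite mxE eq_sym (negbTE Hl) mul0r.
Qed.

Lemma mul_ind_r (F : fieldType) n k p (cl : 'I_n -> 'I_k) (A : 'M[F]_(p, k)) m j :
  (A *m (\matrix_(i0, l) ((cl i0 == l)%:R : F))^T) m j = A m (cl j).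
Proof.
rewrite mxE (bigD1 (cl j)) //= !mxE eqxx mulr1 big1 ?addr0 // => l Hl.
by rewrite !mxE eq_sym (negbTE Hl) mulr0.
Qed.

Lemma det_class (F : fieldType) n k (cl : 'I_n -> 'I_k) (W : 'M[F]_k) (D : 'M[F]_n) (c : F) :
 (forall i j, i != j -> D i j = W (cl i) (cl j)) -> (forall i, D i i = 0) ->
 (forall l, c - W l l != 0) ->
 \det (D + c%:M) = (\prod_l (c - W l l) ^+ #|[pred i | cl i == l]|) *
   \det (1%:M + W *m diag_mx (\row_l (#|[pred i | cl i == l]|%:R / (c - W l l)))).
Proof.
move=> HD HD0 Hc.
pose U := \matrix_(i, l) ((cl i == l)%:R : F).
pose Dl := diag_mx (\row_i (c - W (cl i) (cl i))).
pose Dl' := diag_mx (\row_i (c - W (cl i) (cl i))^-1).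
have E1 : D + c%:M = Dl + U *m W *m U^T.
  have HU : forall i j, (U *m W *m U^T) i j = W (cl i) (cl j).
    by move=> i j; rewrite (@mul_ind_r F) (@mul_ind_l F).
  apply/matrixP=> i j; rewrite [RHS]mxE HU !mxE.
  case: (eqVneq i j) => [Hij|Hij]; first by rewrite -Hij HD0 add0r mulr1n subrK.
  by rewrite HD // !mulr0n addr0 add0r.
have E2 : Dl *m Dl' = 1%:M.
  apply/matrixP=> i j; rewrite mul_diag_mx !mxE.
  case: (eqVneq i j) => [Hij|Hij]; last by rewrite !mulr0n mulr0.
  by rewrite /= mulr1n mulfV.
have E3 : Dl + U *m W *m U^T = Dl *m (1%:M + (Dl' *m U) *m (W *m U^T)).
  by rewrite mulmxDr mulmx1 !mulmxA E2 mul1mx.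
have E4 : (W *m U^T) *m (Dl' *m U) =
   W *m diag_mx (\row_l (#|[pred i | cl i == l]|%:R / (c - W l l))).
  rewrite -!mulmxA; congr (_ *m _); apply/matrixP=> l m.
  rewrite !mxE.
  under eq_bigr => i _ do rewrite mul_diag_mx !mxE.
  case: (eqVneq l m) => [<-|Hlm].
    rewrite mulr1n (bigID (fun i => cl i == l)) /= [X in _ + X]big1 ?addr0; last first.
      by move=> i /negbTE ->; rewrite mul0r.
    rewrite (eq_bigr (fun _ => (c - W l l)^-1)); last first.
      by move=> i /eqP ->; rewrite eqxx mulr1 mul1r.
    by rewrite sumr_const mulr_natl.
  rewrite mulr0n big1 // => i _.
  case: (eqVneq (cl i) l) => [Hl|Hl]; last by rewrite mul0r.
  by rewrite -Hl in Hlm; rewrite (negbTE Hlm) !mulr0.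
rewrite E1 E3 det_mulmx sylvester E4; congr (_ * _).
rewrite det_diag.
rewrite (partition_big cl predT) //=; apply: eq_bigr => l _.
rewrite (eq_bigr (fun _ => c - W l l)); last by move=> i /eqP <-; rewrite mxE.
by rewrite prodr_const.
Qed.


Lemma det3 (R : comRingType) (f : nat -> nat -> R) :
  \det (\matrix_(i < 3, j < 3) f i j) =
  f 0%N 0%N * f 1%N 1%N * f 2%N 2%N - f 0%N 0%N * f 1%N 2%N * f 2%N 1%N - f 0%N 1%N * f 1%N 0%N * f 2%N 2%N
  + f 0%N 1%N * f 1%N 2%N * f 2%N 0%N + f 0%N 2%N * f 1%N 0%N * f 2%N 1%N - f 0%N 2%N * f 1%N 1%N * f 2%N 0%N.
Proof.
repeat rewrite (expand_det_row _ ord0) !big_ord_recr big_ord0 /cofactor /=.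
rewrite !det_mx00 !mxE /= /bump /=.
ring.
Qed.

Lemma det4 (R : comRingType) (f : nat -> nat -> R) :
  \det (\matrix_(i < 4, j < 4) f i j) =
  f 0%N 0%N * f 1%N 1%N * f 2%N 2%N * f 3%N 3%N - f 0%N 0%N * f 1%N 1%N * f 2%N 3%N * f 3%N 2%N - f 0%N 0%N * f 1%N 2%N * f 2%N 1%N * f 3%N 3%N + f 0%N 0%N * f 1%N 2%N * f 2%N 3%N * f 3%N 1%N + f 0%N 0%N * f 1%N 3%N * f 2%N 1%N * f 3%N 2%N - f 0%N 0%N * f 1%N 3%N * f 2%N 2%N * f 3%N 1%N - f 0%N 1%N * f 1%N 0%N * f 2%N 2%N * f 3%N 3%N + f 0%N 1%N * f 1%N 0%N * f 2%N 3%N * f 3%N 2%N + f 0%N 1%N * f 1%N 2%N * f 2%N 0%N * f 3%N 3%N - f 0%N 1%N * f 1%N 2%N * f 2%N 3%N * f 3%N 0%N - f 0%N 1%N * f 1%N 3%N * f 2%N 0%N * f 3%N 2%N + f 0%N 1%N * f 1%N 3%N * f 2%N 2%N * f 3%N 0%N + f 0%N 2%N * f 1%N 0%N * f 2%N 1%N * f 3%N 3%N - f 0%N 2%N * f 1%N 0%N * f 2%N 3%N * f 3%N 1%N - f 0%N 2%N * f 1%N 1%N * f 2%N 0%N * f 3%N 3%N + f 0%N 2%N * f 1%N 1%N * f 2%N 3%N * f 3%N 0%N + f 0%N 2%N * f 1%N 3%N * f 2%N 0%N * f 3%N 1%N - f 0%N 2%N * f 1%N 3%N * f 2%N 1%N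 * f 3%N 0%N - f 0%N 3%N * f 1%N 0%N * f 2%N 1%N * f 3%N 2%N + f 0%N 3%N * f 1%N 0%N * f 2%N 2%N * f 3%N 1%N + f 0%N 3%N * f 1%N 1%N * f 2%N 0%N * f 3%N 2%N - f 0%N 3%N * f 1%N 1%N * f 2%N 2%N * f 3%N 0%N - f 0%N 3%N * f 1%N 2%N * f 2%N 0%N * f 3%N 1%N + f 0%N 3%N * f 1%N 2%N * f 2%N 1%N * f 3%N 0%N.
Proof.
repeat rewrite (expand_det_row _ ord0) !big_ord_recr big_ord0 /cofactor /=.
rewrite !det_mx00 !mxE /= /bump /=.
ring.
Qed.

Lemma card_nat_pred n (P : pred nat) : #|[pred i : 'I_n | P i]| = count P (iota 0 n).
Proof.
rewrite -sum1_card -(big_mkord (fun i => P i) (fun _ => 1%N)).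
by rewrite /index_iota subn0 -sum1_count.
Qed.

Definition Gm n (cn : nat -> nat) (w : nat -> nat -> rat) (c : rat) (i j : nat) : rat :=
  (i == j)%:R + w i j * (count (fun x => cn x == j) (iota 0 n))%:R / (c - w j j).

Lemma det_class_nat n k (cn : nat -> nat) (w : nat -> nat -> rat) (D : 'M[rat]_n) (c : rat) :
 (forall x : 'I_n, (cn x < k.+1)%N) ->
 (forall i j : 'I_n, i != j -> D i j = w (cn i) (cn j)) -> (forall i, D i i = 0) ->
 (forall l, (l < k.+1)%N -> c - w l l != 0) ->
 \det (D + c%:M) = (\prod_(l < k.+1) (c - w l l) ^+ count (fun x => cn x == l) (iota 0 n)) *
   \det (\matrix_(i < k.+1, j < k.+1) Gm n cn w c i j).
Proof.
move=> Hk HD HD0 Hc.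
pose cl := fun i : 'I_n => (inord (cn i) : 'I_k.+1).
have Hcl : forall i, nat_of_ord (cl i) = cn i by move=> i; rewrite /cl /= inordK.
have Hcnt : forall l : 'I_k.+1, #|[pred i | cl i == l]| = count (fun x => cn x == l) (iota 0 n).
  by move=> l; rewrite -card_nat_pred; apply: eq_card => i; rewrite !inE -(inj_eq val_inj) /= Hcl.
rewrite (@det_class _ n k.+1 cl (\matrix_(l, m) w l m) D c).
- congr (_ * _).
    by apply: eq_bigr => l _; rewrite Hcnt mxE.
  congr (\det _); apply/matrixP=> i j; rewrite mul_mx_diag !mxE Hcnt.
  by rewrite /Gm mulrA.
- by move=> i j Hij; rewrite mxE !Hcl; apply: HD.
- exact: HD0.
- by move=> l; rewrite mxE; apply: Hc.
Qed.

Lemma count_iota_all (P : pred nat) m d :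
  (forall x, (m <= x < m + d)%N -> P x) -> count P (iota m d) = d.
Proof.
move=> H; rewrite (@eq_in_count _ _ predT) ?count_predT ?size_iota //.
by move=> x; rewrite mem_iota => /H ->.
Qed.

Lemma count_iota_none (P : pred nat) m d :
  (forall x, (m <= x < m + d)%N -> ~~ P x) -> count P (iota m d) = 0%N.
Proof.
move=> H; rewrite (@eq_in_count _ _ pred0) ?count_pred0 //.
by move=> x; rewrite mem_iota => /H /negbTE ->.
Qed.

Lemma count_split (P : pred nat) m d1 d2 :
  count P (iota m (d1 + d2)%N) = (count P (iota m d1) + count P (iota (m + d1)%N d2))%N.
Proof. by rewrite iotaD count_cat. Qed.

Lemma neq_c (m l : nat) : (l < 3)%N -> ((m + 3)%:R : rat) - l%:R != 0.
Proof. by move=> Hl; rewrite subr_eq0 eqr_nat; lia. Qed.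

Definition cK (h x : nat) : nat := if x == 0%N then 0%N else if (x < h)%N then 1%N else 2%N.
Definition wKn (l m : nat) : nat :=
  if l == m then (if l == 0%N then 0%N else l) else if (l == 0%N) || (m == 0%N) then 1%N else 2%N.
Definition qK (a b : rat) : {poly rat} :=
  'X^3 + (a + 2 * b - 3)%:P * 'X^2 + (- (2 * a * b) - 3 * a - 3 * b + 2)%:P * 'X
  + (a * b + 2 * a + b)%:P.
Definition EK (h n : nat) : {poly rat} :=
  ('X - 1%:P) ^+ (h - 2) * (('X - 2%:P) ^+ (n - h - 1) * qK (h - 1)%:R (n - h)%:R).

Lemma detK h n m : (3 <= h)%N -> (h <= n - 1)%N ->
  \det (distmx (Kh h n) + ((m + 3)%:R : rat)%:M) = (EK h n).[(m + 3)%:R].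
Proof.
move=> H1 H2.
rewrite (@det_class_nat n 2 (cK h) (fun l m => (wKn l m)%:R)).
- have c0 : count (fun x => cK h x == 0%N) (iota 0 n) = 1%N.
  { rewrite -[n](_ : (1 + (n - 1))%N = n); last lia.
    rewrite count_split; rewrite count_iota_all; first rewrite count_iota_none.
    all: try (move=> x Hx; rewrite /cK; repeat (case: ifP => /=); lia).
    lia. }
  have c1 : count (fun x => cK h x == 1%N) (iota 0 n) = (h - 1)%N.
  { rewrite -[n](_ : (1 + (h - 1) + (n - h))%N = n); last lia.
    rewrite !count_split; rewrite count_iota_none; first rewrite count_iota_all; first rewrite count_iota_none.
    all: try (move=> x Hx; rewrite /cK; repeat (case: ifP => /=); lia).
    lia. }
  have c2 : count (fun x => cK h x == 2%N) (iota 0 n) = (n - h)%N.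
  { rewrite -[n](_ : (h + (n - h))%N = n); last lia.
    rewrite !count_split; rewrite count_iota_none; first rewrite count_iota_all.
    all: try (move=> x Hx; rewrite /cK; repeat (case: ifP => /=); lia).
    lia. }
  rewrite !big_ord_recr big_ord0 /= det3 /Gm c0 c1 c2.
  have w00 : wKn 0 0 = 0%N by []. have w11 : wKn 1 1 = 1%N by []. have w22 : wKn 2 2 = 2%N by [].
  have w01 : wKn 0 1 = 1%N by []. have w02 : wKn 0 2 = 1%N by []. have w10 : wKn 1 0 = 1%N by [].
  have w20 : wKn 2 0 = 1%N by []. have w12 : wKn 1 2 = 2%N by []. have w21 : wKn 2 1 = 2%N by [].
  have e00 : ((0 == 0)%N%:R : rat) = 1 by []. have e11 : ((1 == 1)%N%:R : rat) = 1 by [].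
  have e22 : ((2 == 2)%N%:R : rat) = 1 by [].
  have e01 : ((0 == 1)%N%:R : rat) = 0 by []. have e02 : ((0 == 2)%N%:R : rat) = 0 by [].
  have e10 : ((1 == 0)%N%:R : rat) = 0 by []. have e12 : ((1 == 2)%N%:R : rat) = 0 by [].
  have e20 : ((2 == 0)%N%:R : rat) = 0 by []. have e21 : ((2 == 1)%N%:R : rat) = 0 by [].
  rewrite ?w00 ?w11 ?w22 ?w01 ?w02 ?w10 ?w20 ?w12 ?w21 ?e00 ?e11 ?e22 ?e01 ?e02 ?e10 ?e12 ?e20 ?e21.
  set c := ((m + 3)%:R : rat).
  have HE : (EK h n).[c] = (c - 1) ^+ (h - 2) * ((c - 2) ^+ (n - h - 1) *
     (c ^+ 3 + ((h - 1)%:R + 2 * (n - h)%:R - 3) * c ^+ 2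
      + (- (2 * (h - 1)%:R * (n - h)%:R) - 3 * (h - 1)%:R - 3 * (n - h)%:R + 2) * c
      + ((h - 1)%:R * (n - h)%:R + 2 * (h - 1)%:R + (n - h)%:R))).
    by rewrite /EK /qK hornerM horner_exp hornerXsubC hornerM horner_exp hornerXsubC
      !hornerD !hornerCM !hornerXn hornerX hornerC.
  rewrite HE.
  have -> : (c - 1) ^+ (h - 1) = (c - 1) ^+ (h - 2) * (c - 1).
    by rewrite -exprSr; congr (_ ^+ _); lia.
  have -> : (c - 2) ^+ (n - h) = (c - 2) ^+ (n - h - 1) * (c - 2).
    by rewrite -exprSr; congr (_ ^+ _); lia.
  have hc0 := neq_c m 0 isT.
  have hc1 := neq_c m 1 isT.
  have hc2 := neq_c m 2 isT.
  rewrite -/c in hc0 hc1 hc2.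
  set a := (h - 1)%:R; set b := (n - h)%:R.
  set P1 := (c - 1) ^+ (h - 2); set P2 := (c - 2) ^+ (n - h - 1).
  field.
  by move: hc0 hc1 hc2; rewrite /c natrD subr0 => -> -> ->.
- by move=> x; rewrite /cK; repeat (case: ifP => _ /=).
- move=> i j Hij; rewrite mxE distK // /fK /wKn /cK; congr (_%:R).
  move: Hij; rewrite -(inj_eq val_inj) /=.
  by repeat (case: ifP => /=); lia.
- by move=> i; rewrite mxE distK // /fK eqxx.
- move=> l Hl; rewrite /wKn eqxx.
  have -> : (if l == 0%N then 0%N else l) = l by case: ifP => // /eqP ->.
  exact: neq_c.
Qed.


Definition cC (s x : nat) : nat := if x == 0%N then 0%N else if (x < s)%N then 1%N else 2%N.
Definition wCn (l m : nat) : nat :=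
  if l == m then (if l == 0%N then 0%N else 1%N) else if (l == 0%N) || (m == 0%N) then 1%N else 2%N.
Definition qC (a b : rat) : {poly rat} :=
  'X^3 + (a + b - 2)%:P * 'X^2 + (- (3 * a * b) - 2 * a - 2 * b + 1)%:P * 'X
  + (2 * a * b + a + b)%:P.
Definition EC (s t : nat) : {poly rat} :=
  ('X - 1%:P) ^+ (s + t - 4) * (('X - 2%:P) ^+ 0 * qC (s - 1)%:R (t - 1)%:R).

Definition cP (s x : nat) : nat :=
  if x == 0%N then 0%N else if (x < s)%N then 1%N else if x == s then 2%N else 3%N.
Definition wPn (l m : nat) : nat :=
  if l == m then (if (l == 0%N) || (l == 2%N) then 0%N else 1%N) else fP 2 l m.
Definition qP (a b : rat) : {poly rat} :=
  'X^4 + (a + b - 2)%:P * 'X^3 + (- (8 * a * b) - 6 * a - 6 * b)%:P * 'X^2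
  + (14 * a * b + 8 * a + 8 * b + 2)%:P * 'X + (- (5 * a * b) - 3 * a - 3 * b - 1)%:P.
Definition EP (s t : nat) : {poly rat} :=
  ('X - 1%:P) ^+ (s + t - 4) * (('X - 2%:P) ^+ 0 * qP (s - 1)%:R (t - 1)%:R).

Lemma detC s t m : (2 <= s)%N -> (2 <= t)%N ->
  \det (distmx (Kscomma s t) + ((m + 3)%:R : rat)%:M) = (EC s t).[(m + 3)%:R].
Proof.
move=> H1 H2.
rewrite (@det_class_nat (s + t - 1)%N 2 (cC s) (fun l m => (wCn l m)%:R)).
- have cnt0 : count (fun x => cC s x == 0%N) (iota 0 (s + t - 1)%N) = ((1))%N.
  { rewrite -[(s + t - 1)%N](_ : ((1) + (s - 1) + (t - 1))%N = (s + t - 1)%N); last lia.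
    rewrite !count_split; rewrite count_iota_all; first rewrite count_iota_none; first rewrite count_iota_none.
    all: try (move=> x Hx; rewrite /cC; repeat (case: ifP => /=); lia).
    lia. }
  have cnt1 : count (fun x => cC s x == 1%N) (iota 0 (s + t - 1)%N) = ((s - 1))%N.
  { rewrite -[(s + t - 1)%N](_ : ((1) + (s - 1) + (t - 1))%N = (s + t - 1)%N); last lia.
    rewrite !count_split; rewrite count_iota_none; first rewrite count_iota_all; first rewrite count_iota_none.
    all: try (move=> x Hx; rewrite /cC; repeat (case: ifP => /=); lia).
    lia. }
  have cnt2 : count (fun x => cC s x == 2%N) (iota 0 (s + t - 1)%N) = ((t - 1))%N.
  { rewrite -[(s + t - 1)%N](_ : ((1) + (s - 1) + (t - 1))%N = (s + t - 1)%N); last lia.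
    rewrite !count_split; rewrite count_iota_none; first rewrite count_iota_none; first rewrite count_iota_all.
    all: try (move=> x Hx; rewrite /cC; repeat (case: ifP => /=); lia).
    lia. }
  rewrite !big_ord_recr big_ord0 /= det3 /Gm cnt0 cnt1 cnt2.
  have w00 : wCn 0 0 = 0%N by [].
  have w01 : wCn 0 1 = 1%N by [].
  have w02 : wCn 0 2 = 1%N by [].
  have w10 : wCn 1 0 = 1%N by [].
  have w11 : wCn 1 1 = 1%N by [].
  have w12 : wCn 1 2 = 2%N by [].
  have w20 : wCn 2 0 = 1%N by [].
  have w21 : wCn 2 1 = 2%N by [].
  have w22 : wCn 2 2 = 1%N by [].
  have e00 : ((0 == 0)%N%:R : rat) = 1 by [].
  have e01 : ((0 == 1)%N%:R : rat) = 0 by [].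
  have e02 : ((0 == 2)%N%:R : rat) = 0 by [].
  have e10 : ((1 == 0)%N%:R : rat) = 0 by [].
  have e11 : ((1 == 1)%N%:R : rat) = 1 by [].
  have e12 : ((1 == 2)%N%:R : rat) = 0 by [].
  have e20 : ((2 == 0)%N%:R : rat) = 0 by [].
  have e21 : ((2 == 1)%N%:R : rat) = 0 by [].
  have e22 : ((2 == 2)%N%:R : rat) = 1 by [].
  rewrite ?w00 ?w01 ?w02 ?w10 ?w11 ?w12 ?w20 ?w21 ?w22 ?e00 ?e01 ?e02 ?e10 ?e11 ?e12 ?e20 ?e21 ?e22.
  set c := ((m + 3)%:R : rat).
  have HE : (EC s t).[c] = (c - 1) ^+ (s + t - 4) * ((c - 2) ^+ 0 * (c ^+ 3 + ((s - 1)%:R + (t - 1)%:R - 2) * c ^+ 2 + (- (3 * (s - 1)%:R * (t - 1)%:R) - 2 * (s - 1)%:R - 2 * (t - 1)%:R + 1) * c + (2 * (s - 1)%:R * (t - 1)%:R + (s - 1)%:R + (t - 1)%:R))).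
    by rewrite /EC /qC hornerM horner_exp hornerXsubC hornerM horner_exp hornerXsubC
      !hornerD !hornerCM !hornerXn hornerX hornerC.
  rewrite HE.
  have -> : (c - 1) ^+ (s + t - 4) = (c - 1) ^+ (s - 2) * (c - 1) ^+ (t - 2).
    by rewrite -exprD; congr (_ ^+ _); lia.
  have -> : (c - 1) ^+ (s - 1) = (c - 1) ^+ (s - 2) * (c - 1).
    by rewrite -exprSr; congr (_ ^+ _); lia.
  have -> : (c - 1) ^+ (t - 1) = (c - 1) ^+ (t - 2) * (c - 1).
    by rewrite -exprSr; congr (_ ^+ _); lia.
  set a := (s - 1)%:R; set b := (t - 1)%:R.
  set P1 := (c - 1) ^+ (s - 2); set P2 := (c - 1) ^+ (t - 2).
  have hc0 := neq_c m 0 isT.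
  have hc1 := neq_c m 1 isT.
  have hc2 := neq_c m 2 isT.
  rewrite -/c in hc0 hc1 hc2.
  field.
  by move: hc0 hc1 hc2; rewrite /c natrD subr0 => h0 h1 h2; rewrite ?h0 ?h1 ?h2.
- by move=> x; rewrite /cC; repeat (case: ifP => _ /=).
- move=> i j Hij; rewrite mxE distC // /fC /wCn /cC; congr (_%:R).
  move: Hij; rewrite -(inj_eq val_inj) /=.
  by repeat (case: ifP => /=); lia.
- by move=> i; rewrite mxE distC // /fC /wCn /cC eqxx.
- move=> l Hl; rewrite /wCn eqxx; apply: neq_c; by repeat (case: ifP => _ /=).
Qed.

Lemma detP s t m : (2 <= s)%N -> (2 <= t)%N ->
  \det (distmx (Ksplus s t) + ((m + 3)%:R : rat)%:M) = (EP s t).[(m + 3)%:R].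
Proof.
move=> H1 H2.
rewrite (@det_class_nat (s + t)%N 3 (cP s) (fun l m => (wPn l m)%:R)).
- have cnt0 : count (fun x => cP s x == 0%N) (iota 0 (s + t)%N) = ((1))%N.
  { rewrite -[(s + t)%N](_ : ((1) + (s - 1) + (1) + (t - 1))%N = (s + t)%N); last lia.
    rewrite !count_split; rewrite count_iota_all; first rewrite count_iota_none; first rewrite count_iota_none; first rewrite count_iota_none.
    all: try (move=> x Hx; rewrite /cP; repeat (case: ifP => /=); lia).
    lia. }
  have cnt1 : count (fun x => cP s x == 1%N) (iota 0 (s + t)%N) = ((s - 1))%N.
  { rewrite -[(s + t)%N](_ : ((1) + (s - 1) + (1) + (t - 1))%N = (s + t)%N); last lia.
    rewrite !count_split; rewrite count_iota_none; first rewrite count_iota_all; first rewrite count_iota_none; first rewrite count_iota_none.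
    all: try (move=> x Hx; rewrite /cP; repeat (case: ifP => /=); lia).
    lia. }
  have cnt2 : count (fun x => cP s x == 2%N) (iota 0 (s + t)%N) = ((1))%N.
  { rewrite -[(s + t)%N](_ : ((1) + (s - 1) + (1) + (t - 1))%N = (s + t)%N); last lia.
    rewrite !count_split; rewrite count_iota_none; first rewrite count_iota_none; first rewrite count_iota_all; first rewrite count_iota_none.
    all: try (move=> x Hx; rewrite /cP; repeat (case: ifP => /=); lia).
    lia. }
  have cnt3 : count (fun x => cP s x == 3%N) (iota 0 (s + t)%N) = ((t - 1))%N.
  { rewrite -[(s + t)%N](_ : ((1) + (s - 1) + (1) + (t - 1))%N = (s + t)%N); last lia.
    rewrite !count_split; rewrite count_iota_none; first rewrite count_iota_none; first rewrite count_iota_none; first rewrite count_iota_all.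
    all: try (move=> x Hx; rewrite /cP; repeat (case: ifP => /=); lia).
    lia. }
  rewrite !big_ord_recr big_ord0 /= det4 /Gm cnt0 cnt1 cnt2 cnt3.
  have w00 : wPn 0 0 = 0%N by [].
  have w01 : wPn 0 1 = 1%N by [].
  have w02 : wPn 0 2 = 1%N by [].
  have w03 : wPn 0 3 = 2%N by [].
  have w10 : wPn 1 0 = 1%N by [].
  have w11 : wPn 1 1 = 1%N by [].
  have w12 : wPn 1 2 = 2%N by [].
  have w13 : wPn 1 3 = 3%N by [].
  have w20 : wPn 2 0 = 1%N by [].
  have w21 : wPn 2 1 = 2%N by [].
  have w22 : wPn 2 2 = 0%N by [].
  have w23 : wPn 2 3 = 1%N by [].
  have w30 : wPn 3 0 = 2%N by [].
  have w31 : wPn 3 1 = 3%N by [].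
  have w32 : wPn 3 2 = 1%N by [].
  have w33 : wPn 3 3 = 1%N by [].
  have e00 : ((0 == 0)%N%:R : rat) = 1 by [].
  have e01 : ((0 == 1)%N%:R : rat) = 0 by [].
  have e02 : ((0 == 2)%N%:R : rat) = 0 by [].
  have e03 : ((0 == 3)%N%:R : rat) = 0 by [].
  have e10 : ((1 == 0)%N%:R : rat) = 0 by [].
  have e11 : ((1 == 1)%N%:R : rat) = 1 by [].
  have e12 : ((1 == 2)%N%:R : rat) = 0 by [].
  have e13 : ((1 == 3)%N%:R : rat) = 0 by [].
  have e20 : ((2 == 0)%N%:R : rat) = 0 by [].
  have e21 : ((2 == 1)%N%:R : rat) = 0 by [].
  have e22 : ((2 == 2)%N%:R : rat) = 1 by [].
  have e23 : ((2 == 3)%N%:R : rat) = 0 by [].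
  have e30 : ((3 == 0)%N%:R : rat) = 0 by [].
  have e31 : ((3 == 1)%N%:R : rat) = 0 by [].
  have e32 : ((3 == 2)%N%:R : rat) = 0 by [].
  have e33 : ((3 == 3)%N%:R : rat) = 1 by [].
  rewrite ?w00 ?w01 ?w02 ?w03 ?w10 ?w11 ?w12 ?w13 ?w20 ?w21 ?w22 ?w23 ?w30 ?w31 ?w32 ?w33 ?e00 ?e01 ?e02 ?e03 ?e10 ?e11 ?e12 ?e13 ?e20 ?e21 ?e22 ?e23 ?e30 ?e31 ?e32 ?e33.
  set c := ((m + 3)%:R : rat).
  have HE : (EP s t).[c] = (c - 1) ^+ (s + t - 4) * ((c - 2) ^+ 0 * (c ^+ 4 + ((s - 1)%:R + (t - 1)%:R - 2) * c ^+ 3 + (- (8 * (s - 1)%:R * (t - 1)%:R) - 6 * (s - 1)%:R - 6 * (t - 1)%:R) * c ^+ 2 + (14 * (s - 1)%:R * (t - 1)%:R + 8 * (s - 1)%:R + 8 * (t - 1)%:R + 2) * c + (- (5 * (s - 1)%:R * (t - 1)%:R) - 3 * (s - 1)%:R - 3 * (t - 1)%:R - 1))).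
    by rewrite /EP /qP hornerM horner_exp hornerXsubC hornerM horner_exp hornerXsubC
      !hornerD !hornerCM !hornerXn hornerX hornerC.
  rewrite HE.
  have -> : (c - 1) ^+ (s + t - 4) = (c - 1) ^+ (s - 2) * (c - 1) ^+ (t - 2).
    by rewrite -exprD; congr (_ ^+ _); lia.
  have -> : (c - 1) ^+ (s - 1) = (c - 1) ^+ (s - 2) * (c - 1).
    by rewrite -exprSr; congr (_ ^+ _); lia.
  have -> : (c - 1) ^+ (t - 1) = (c - 1) ^+ (t - 2) * (c - 1).
    by rewrite -exprSr; congr (_ ^+ _); lia.
  set a := (s - 1)%:R; set b := (t - 1)%:R.
  set P1 := (c - 1) ^+ (s - 2); set P2 := (c - 1) ^+ (t - 2).
  have hc0 := neq_c m 0 isT.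
  have hc1 := neq_c m 1 isT.
  have hc2 := neq_c m 2 isT.
  rewrite -/c in hc0 hc1 hc2.
  field.
  by move: hc0 hc1 hc2; rewrite /c natrD subr0 => h0 h1 h2; rewrite ?h0 ?h1 ?h2.
- by move=> x; rewrite /cP; repeat (case: ifP => _ /=).
- move=> i j Hij; rewrite mxE distP // /wPn /fP /gP /cP; congr (_%:R).
  move: Hij; rewrite -(inj_eq val_inj) /=.
  by repeat (case: ifP => /=); lia.
- by move=> i; rewrite mxE distP // /wPn /fP /gP /cP eqxx.
- move=> l Hl; rewrite /wPn eqxx; apply: neq_c; by repeat (case: ifP => _ /=).
Qed.

Lemma cp_eval n (A : 'M[rat]_n) (x : rat) : (char_poly A).[x] = \det (x%:M - A).
Proof.
rewrite /char_poly -horner_evalE -det_map_mx; congr (\det _).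
apply/matrixP=> i j; rewrite !mxE /= horner_evalE hornerD hornerN hornerMn hornerX hornerC.
by [].
Qed.

Lemma cp_det n (A : 'M[rat]_n) (c : rat) :
  \det (A + c%:M) = (-1) ^+ n * (char_poly A).[- c].
Proof.
rewrite cp_eval (_ : (- c)%:M - A = (-1) *: (A + c%:M)); last first.
  by rewrite scaleN1r opprD raddfN addrC.
by rewrite detZ mulrA -exprMn mulrNN mulr1 expr1n mul1r.
Qed.

Lemma poly_eq_nat (p q : {poly rat}) :
  (forall m : nat, p.[(m + 3)%:R] = q.[(m + 3)%:R]) -> p = q.
Proof.
move=> H; apply/eqP; rewrite -subr_eq0; apply/eqP.
apply: (@roots_geq_poly_eq0 _ _ [seq ((m + 3)%:R : rat) | m <- iota 0 (size (p - q))]).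
- by apply/allP=> x /mapP[m _ ->]; rewrite /root hornerD hornerN H subrr.
- rewrite map_inj_uniq ?iota_uniq // => a b /eqP; rewrite eqr_nat => /eqP; lia.
- by rewrite size_map size_iota.
Qed.

Lemma cancel_lin (a : rat) (A A' : nat) (r r' : {poly rat}) :
  r.[a] != 0 -> r'.[a] != 0 ->
  ('X - a%:P) ^+ A * r = ('X - a%:P) ^+ A' * r' -> A = A' /\ r = r'.
Proof.
have Hx : forall k, ('X - a%:P) ^+ k != 0 by move=> k; rewrite expf_neq0 // polyXsubC_eq0.
have key : forall A A' r r', r.[a] != 0 -> (A < A')%N ->
    ('X - a%:P) ^+ A * r = ('X - a%:P) ^+ A' * r' -> False.
  move=> B B' s s' Hs Hlt E.
  move: E; rewrite -(subnKC (ltnW Hlt)) exprD -mulrA => /(mulfI (Hx B)) E.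
  move: Hs; rewrite E hornerM horner_exp hornerXsubC subrr expr0n /=.
  by rewrite (_ : (B' - B == 0)%N = false) ?mul0r ?eqxx //; lia.
move=> Hr Hr' E; case: (ltngtP A A') => HA.
- by case: (key _ _ _ _ Hr HA E).
- by case: (key _ _ _ _ Hr' HA (esym E)).
- by subst; split => //; apply: (mulfI (Hx A')).
Qed.

Lemma cancel2 (A B A' B' : nat) (q q' : {poly rat}) :
  q.[1] != 0 -> q.[2] != 0 -> q'.[1] != 0 -> q'.[2] != 0 ->
  ('X - 1%:P) ^+ A * (('X - 2%:P) ^+ B * q) = ('X - 1%:P) ^+ A' * (('X - 2%:P) ^+ B' * q') ->
  [/\ A = A', B = B' & q = q'].
Proof.
move=> h1 h2 h1' h2' E.
have nz : forall k, ((1 : rat) - 2) ^+ k != 0 by move=> k; rewrite expf_neq0.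
have r1 : (('X - 2%:P) ^+ B * q).[1] != 0.
  by rewrite hornerM horner_exp hornerXsubC mulf_neq0.
have r1' : (('X - 2%:P) ^+ B' * q').[1] != 0.
  by rewrite hornerM horner_exp hornerXsubC mulf_neq0.
have [HA E2] := cancel_lin _ _ _ _ _ r1 r1' E.
by have [HB E3] := cancel_lin _ _ _ _ _ h2 h2' E2.
Qed.

Lemma qK_eval a b x : (qK a b).[x] = x ^+ 3 + (a + 2 * b - 3) * x ^+ 2
  + (- (2 * a * b) - 3 * a - 3 * b + 2) * x + (a * b + 2 * a + b).
Proof. by rewrite /qK !hornerD !hornerCM !hornerXn hornerX hornerC. Qed.
Lemma qC_eval a b x : (qC a b).[x] = x ^+ 3 + (a + b - 2) * x ^+ 2
  + (- (3 * a * b) - 2 * a - 2 * b + 1) * x + (2 * a * b + a + b).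
Proof. by rewrite /qC !hornerD !hornerCM !hornerXn hornerX hornerC. Qed.
Lemma qP_eval a b x : (qP a b).[x] = x ^+ 4 + (a + b - 2) * x ^+ 3
  + (- (8 * a * b) - 6 * a - 6 * b) * x ^+ 2 + (14 * a * b + 8 * a + 8 * b + 2) * x
  + (- (5 * a * b) - 3 * a - 3 * b - 1).
Proof. by rewrite /qP !hornerD !hornerCM !hornerXn hornerX hornerC. Qed.

Lemma natr_ge (k m : nat) : (k <= m)%N -> (k%:R : rat) <= m%:R.
Proof. by rewrite ler_nat. Qed.

Lemma qK_nz (a b : rat) : 2 <= a -> 1 <= b ->
  (qK a b).[1] != 0 /\ (qK a b).[2] != 0.
Proof.
move=> ha hb; rewrite !qK_eval; split; apply: ltr0_neq0; rewrite ?expr1n; nra.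
Qed.

Lemma qC_nz (a b : rat) : 1 <= a -> 1 <= b -> 3 <= a + b ->
  (qC a b).[1] != 0 /\ (qC a b).[2] != 0.
Proof.
move=> ha hb hab; rewrite !qC_eval; split; apply: ltr0_neq0; rewrite ?expr1n; nra.
Qed.

Lemma qP_nz (a b : rat) : 1 <= a -> 1 <= b ->
  (qP a b).[1] != 0 /\ (qP a b).[2] != 0.
Proof.
move=> ha hb; rewrite !qP_eval; split; [apply: lt0r_neq0 | apply: ltr0_neq0];
  rewrite ?expr1n; nra.
Qed.

Lemma sym_pair (a b a' b' : rat) : a + b = a' + b' -> a * b = a' * b' ->
  (a = a' /\ b = b') \/ (a = b' /\ b = a').
Proof.
move=> H1 H2.
have hb : b = a' + b' - a by lra.
have : (a - a') * (a - b') == 0 by apply/eqP; rewrite hb in H2; nra.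
rewrite mulf_eq0 => /orP[] /eqP h; [left|right]; lra.
Qed.

Lemma natr_eq (x y : nat) : (x%:R : rat) = y%:R -> x = y.
Proof. by move/eqP; rewrite eqr_nat => /eqP. Qed.

Lemma natr_sum (x y z : nat) : (x + y)%N = z -> (x%:R : rat) + y%:R = z%:R.
Proof. by move=> <-; rewrite natrD. Qed.

Lemma ge_r2 (m : nat) : (2 <= m)%N -> (2 : rat) <= m%:R.
Proof. by rewrite ler_nat. Qed.
Lemma ge_r1 (m : nat) : (1 <= m)%N -> (1 : rat) <= m%:R.
Proof. by move=> H; rewrite (_ : (1 : rat) = 1%:R) // ler_nat. Qed.
Lemma ge_r3 (m : nat) : (3 <= m)%N -> (3 : rat) <= m%:R.
Proof. by rewrite ler_nat. Qed.

Lemma isoK h n h' n' : (3 <= h)%N -> (h <= n - 1)%N -> (3 <= h')%N -> (h' <= n' - 1)%N ->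
  n = n' -> EK h n = EK h' n' -> isomorphic (Kh h n) (Kh h' n').
Proof.
move=> H1 H2 H1' H2' Hn E.
have [z1 z2] := @qK_nz _ _ (@ge_r2 (h - 1) ltac:(lia)) (@ge_r1 (n - h) ltac:(lia)).
have [z1' z2'] := @qK_nz _ _ (@ge_r2 (h' - 1) ltac:(lia)) (@ge_r1 (n' - h') ltac:(lia)).
have [HA HB Hq] := @cancel2 _ _ _ _ _ _ z1 z2 z1' z2' E.
have -> : h = h' by lia.
rewrite Hn; exact: iso_refl.
Qed.

Lemma natr_eq1 (x : nat) : (x%:R : rat) = 1 -> x = 1%N.
Proof. by move/eqP; rewrite pnatr_eq1 => /eqP. Qed.

Lemma sum3 (x y : nat) : (3 <= x + y)%N -> (3 : rat) <= x%:R + y%:R.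
Proof. by move=> H; rewrite -natrD; apply: ge_r3. Qed.

Lemma isoKC h n s t : (3 <= h)%N -> (h <= n - 1)%N -> (2 <= s)%N -> (2 <= t)%N ->
  n = (s + t - 1)%N -> EK h n = EC s t -> isomorphic (Kh h n) (Kscomma s t).
Proof.
move=> H1 H2 Hs Ht Hn E.
have [z1 z2] := @qK_nz _ _ (@ge_r2 (h - 1) ltac:(lia)) (@ge_r1 (n - h) ltac:(lia)).
have [z1' z2'] := @qC_nz _ _ (@ge_r1 (s - 1) ltac:(lia)) (@ge_r1 (t - 1) ltac:(lia))
   (@sum3 (s - 1) (t - 1) ltac:(lia)).
have [HA HB Hq] := @cancel2 _ _ _ _ _ _ z1 z2 z1' z2' E.
have Hh : h = (n - 1)%N by lia.
have := congr1 (fun p => p.[0]) Hq; rewrite /= qK_eval qC_eval.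
rewrite (_ : (n - h)%N = 1%N); last lia.
have ea := @natr_sum (h - 1) 1 ((s - 1) + (t - 1)) ltac:(lia).
rewrite natrD in ea.
move=> Eq0.
have : ((s - 1)%:R - 1 : rat) * ((t - 1)%:R - 1) == 0 by apply/eqP; nra.
rewrite mulf_eq0 => /orP[] /eqP e.
- have es : s = 2%N by have := @natr_eq1 (s - 1) ltac:(lra); lia.
  have et : t = (n - 1)%N by lia.
  rewrite Hh es et.
  apply: (@iso_trans _ (Kscomma (n - 1) 2)); [apply: iso_K_comma | apply: iso_comma_swap]; lia.
- have et : t = 2%N by have := @natr_eq1 (t - 1) ltac:(lra); lia.
  have es : s = (n - 1)%N by lia.
  rewrite Hh es et; apply: iso_K_comma; lia.
Qed.

Lemma isoCC s t s' t' : (2 <= s)%N -> (2 <= t)%N -> (2 <= s')%N -> (2 <= t')%N ->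
  (s + t - 1)%N = (s' + t' - 1)%N -> EC s t = EC s' t' ->
  isomorphic (Kscomma s t) (Kscomma s' t').
Proof.
move=> Hs Ht Hs' Ht' Hn E.
case: (ltnP (s + t) 5) => Hst.
  have [-> ->] : s = 2%N /\ t = 2%N by lia.
  have [-> ->] : s' = 2%N /\ t' = 2%N by lia.
  exact: iso_refl.
have [z1 z2] := @qC_nz _ _ (@ge_r1 (s - 1) ltac:(lia)) (@ge_r1 (t - 1) ltac:(lia))
   (@sum3 (s - 1) (t - 1) ltac:(lia)).
have [z1' z2'] := @qC_nz _ _ (@ge_r1 (s' - 1) ltac:(lia)) (@ge_r1 (t' - 1) ltac:(lia))
   (@sum3 (s' - 1) (t' - 1) ltac:(lia)).
have [HA HB Hq] := @cancel2 _ _ _ _ _ _ z1 z2 z1' z2' E.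
have := congr1 (fun p => p.[0]) Hq; rewrite /= !qC_eval => Eq0.
have ea := @natr_sum (s - 1) (t - 1) ((s' - 1) + (t' - 1)) ltac:(lia).
rewrite natrD in ea.
have [[e1 e2]|[e1 e2]] := @sym_pair _ _ _ _ ea ltac:(lra).
- have -> : s = s' by have := @natr_eq _ _ e1; lia.
  have -> : t = t' by have := @natr_eq _ _ e2; lia.
  exact: iso_refl.
- have -> : s = t' by have := @natr_eq _ _ e1; lia.
  have -> : t = s' by have := @natr_eq _ _ e2; lia.
  exact: iso_comma_swap.
Qed.

Lemma isoPP s t s' t' : (2 <= s)%N -> (2 <= t)%N -> (2 <= s')%N -> (2 <= t')%N ->
  (s + t)%N = (s' + t')%N -> EP s t = EP s' t' ->
  isomorphic (Ksplus s t) (Ksplus s' t').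
Proof.
move=> Hs Ht Hs' Ht' Hn E.
have [z1 z2] := @qP_nz _ _ (@ge_r1 (s - 1) ltac:(lia)) (@ge_r1 (t - 1) ltac:(lia)).
have [z1' z2'] := @qP_nz _ _ (@ge_r1 (s' - 1) ltac:(lia)) (@ge_r1 (t' - 1) ltac:(lia)).
have [HA HB Hq] := @cancel2 _ _ _ _ _ _ z1 z2 z1' z2' E.
have := congr1 (fun p => p.[0]) Hq; rewrite /= !qP_eval => Eq0.
have ea := @natr_sum (s - 1) (t - 1) ((s' - 1) + (t' - 1)) ltac:(lia).
rewrite natrD in ea.
have [[e1 e2]|[e1 e2]] := @sym_pair _ _ _ _ ea ltac:(lra).
- have -> : s = s' by have := @natr_eq _ _ e1; lia.
  have -> : t = t' by have := @natr_eq _ _ e2; lia.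
  exact: iso_refl.
- have -> : s = t' by have := @natr_eq _ _ e1; lia.
  have -> : t = s' by have := @natr_eq _ _ e2; lia.
  exact: iso_plus_swap.
Qed.

Lemma noCP s t s' t' : (2 <= s)%N -> (2 <= t)%N -> (2 <= s')%N -> (2 <= t')%N ->
  (s + t - 1)%N = (s' + t')%N -> EC s t = EP s' t' -> False.
Proof.
move=> Hs Ht Hs' Ht' Hn E.
have [z1 z2] := @qC_nz _ _ (@ge_r1 (s - 1) ltac:(lia)) (@ge_r1 (t - 1) ltac:(lia))
   (@sum3 (s - 1) (t - 1) ltac:(lia)).
have [z1' z2'] := @qP_nz _ _ (@ge_r1 (s' - 1) ltac:(lia)) (@ge_r1 (t' - 1) ltac:(lia)).
have [HA HB Hq] := @cancel2 _ _ _ _ _ _ z1 z2 z1' z2' E.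
lia.
Qed.

Lemma noKP h n s t : (3 <= h)%N -> (h <= n - 1)%N -> (2 <= s)%N -> (2 <= t)%N ->
  n = (s + t)%N -> EK h n = EP s t -> False.
Proof.
move=> H1 H2 Hs Ht Hn E.
have [z1 z2] := @qK_nz _ _ (@ge_r2 (h - 1) ltac:(lia)) (@ge_r1 (n - h) ltac:(lia)).
have [z1' z2'] := @qP_nz _ _ (@ge_r1 (s - 1) ltac:(lia)) (@ge_r1 (t - 1) ltac:(lia)).
have [HA HB Hq] := @cancel2 _ _ _ _ _ _ z1 z2 z1' z2' E.
lia.
Qed.

Theorem corollary2p8 (G1 G2 : sgraph) :
  in_families G1 -> in_families G2 -> D_cospectral G1 G2 -> isomorphic G1 G2.
Proof.
move=> F1 F2 Hcp.
have Hn : nv G1 = nv G2.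
  by have := congr1 (fun p : {poly rat} => size p) (Hcp : char_poly (distmx G1) = _); rewrite !size_char_poly; case.
have key : forall E1 E2 : {poly rat},
   (forall m, \det (distmx G1 + ((m + 3)%:R : rat)%:M) = E1.[(m + 3)%:R]) ->
   (forall m, \det (distmx G2 + ((m + 3)%:R : rat)%:M) = E2.[(m + 3)%:R]) -> E1 = E2.
  move=> E1 E2 H1 H2; apply: poly_eq_nat => m.
  by rewrite -H1 -H2 !cp_det; rewrite /D_cospectral in Hcp; rewrite Hcp Hn.
case: F1 => [[h [n [H1 [H2 EG1]]]] | [[s [t [Hs [Ht EG1]]]] | [s [t [Hs [Ht EG1]]]]]];
case: F2 => [[h' [n' [H1' [H2' EG2]]]] | [[s' [t' [Hs' [Ht' EG2]]]] | [s' [t' [Hs' [Ht' EG2]]]]]];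
  subst G1 G2; simpl in Hn.
- exact: isoK H1 H2 H1' H2' Hn (key _ _ (fun m => @detK _ _ m H1 H2) (fun m => @detK _ _ m H1' H2')).
- by case: (@noKP _ _ _ _ H1 H2 Hs' Ht' Hn (key _ _ (fun m => @detK _ _ m H1 H2) (fun m => @detP _ _ m Hs' Ht'))).
- exact: isoKC H1 H2 Hs' Ht' Hn (key _ _ (fun m => @detK _ _ m H1 H2) (fun m => @detC _ _ m Hs' Ht')).
- by case: (@noKP _ _ _ _ H1' H2' Hs Ht (esym Hn) (esym (key _ _ (fun m => @detP _ _ m Hs Ht) (fun m => @detK _ _ m H1' H2')))).
- exact: isoPP Hs Ht Hs' Ht' Hn (key _ _ (fun m => @detP _ _ m Hs Ht) (fun m => @detP _ _ m Hs' Ht')).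
- by case: (@noCP _ _ _ _ Hs' Ht' Hs Ht (esym Hn) (esym (key _ _ (fun m => @detP _ _ m Hs Ht) (fun m => @detC _ _ m Hs' Ht')))).
- apply: iso_sym.
  exact: isoKC H1' H2' Hs Ht (esym Hn) (esym (key _ _ (fun m => @detC _ _ m Hs Ht) (fun m => @detK _ _ m H1' H2'))).
- by case: (@noCP _ _ _ _ Hs Ht Hs' Ht' Hn (key _ _ (fun m => @detC _ _ m Hs Ht) (fun m => @detP _ _ m Hs' Ht'))).
- exact: isoCC Hs Ht Hs' Ht' Hn (key _ _ (fun m => @detC _ _ m Hs Ht) (fun m => @detC _ _ m Hs' Ht')).
Qed.
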